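(* Let $\mathcal{C}$ be a small category in which no composite of non-identity morphisms is an identity, and let $M,N$ be $k\mathcal{C}$-modules such that $X=[M]-[N]$ satisfies $d^0X=0$, i.e. $\partial_0^*M\oplus\partial_1^*N\cong\partial_0^*N\oplus\partial_1^*M$ as $k\mathcal{G}^{\mathcal{C}}_1$-modules. Then for each line-component $\mathcal{M}$ of $\mathcal{C}$, the function $\operatorname{rk}X$ is constant on the morphisms in $\mathcal{M}$, and it is constant on the set of identity morphisms $1_x$ of the objects $x$ that are domains or codomains of morphisms in $\mathcal{M}$.
   Context: A $k\mathcal{C}$-module is a functor from $\mathcal{C}$ to finite-dimensional $k$-vector spaces ($k$ a field). For $X=[M]-[N]$ in the split Grothendieck group and a morphism $\varphi$ of $\mathcal{C}$, the rank invariant is $\operatorname{rk}X(\varphi)=\operatorname{rank}M(\varphi)-\operatorname{rank}N(\varphi)$ (so $\operatorname{rk}X(1_x)=\dim M(x)-\dim N(x)$). $\mathcal{G}^{\mathcal{C}}_1$ is the category whose objects are the non-identity morphisms $u:a\to b$ of $\mathcal{C}$ (written $[u]$); its morphisms $[u]\to[v]$ ($v:c\to d$) are identities and the pairs $(w\circ u,\;v\circ w)$ for each $w:b\to c$ in $\mathcal{C}$. The functors $\partial_0,\partial_1:\mathcal{G}^{\mathcal{C}}_1\to\mathcal{C}$ are $\partial_0[u]=b$, $\partial_0(f_0,f_1)=f_1$, $\partial_1[u]=a$, $\partial_1(f_0,f_1)=f_0$, and $d^0=\partial_0^*-\partial_1^*$ with $F^*M=M\circ F$. A set of non-identity morphisms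 of $\mathcal{C}$ is a line-component if the full subcategory of $\mathcal{G}^{\mathcal{C}}_1$ on it is a connected component of $\mathcal{G}^{\mathcal{C}}_1$. *)

(* Defs.v *)
From Stdlib Require Import Relations.
From HB Require Import structures.
From mathcomp Require Import all_boot all_order all_algebra.
Set Implicit Arguments. Unset Strict Implicit. Unset Printing Implicit Defensive.
Import GRing.Theory Num.Theory.
Local Open Scope ring_scope.

Record category := Category {
  Obj : Type;
  Hom : Obj -> Obj -> Type;
  idm : forall a, Hom a a;
  comp : forall a b c, Hom b c -> Hom a b -> Hom a c;
  comp_id_l : forall a b (f : Hom a b), comp (idm b) f = f;
  comp_id_r : forall a b (f : Hom a b), comp f (idm a) = f;
  comp_assoc : forall a b c d (f : Hom a b) (g : Hom b c) (h : Hom c d),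
      comp h (comp g f) = comp (comp h g) f
}.
Arguments Hom : clear implicits.
Arguments idm {C} a : rename.
Arguments comp {C a b c} g f : rename.

Definition Arr (C : category) := {a : Obj C & {b : Obj C & Hom C a b}}.
Definition arr (C : category) (a b : Obj C) (f : Hom C a b) : Arr C :=
  existT _ a (existT _ b f).
Definition src (C : category) (u : Arr C) : Obj C := projT1 u.
Definition tgt (C : category) (u : Arr C) : Obj C := projT1 (projT2 u).
Definition mor (C : category) (u : Arr C) : Hom C (src u) (tgt u) :=
  projT2 (projT2 u).

Definition is_id (C : category) (u : Arr C) : Prop :=
  exists x : Obj C, u = arr (idm x).

Definition no_id_composites (C : category) : Prop :=
  forall (a b c : Obj C) (f : Hom C a b) (g : Hom C b c),
    ~ is_id (arr f) -> ~ is_id (arr g) -> ~ is_id (arr (comp g f)).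

(** kC-modules: functors C -> finite-dimensional k-vector spaces.  M(x) is
    k^(dim x) (row vectors), and M(f) for f : a -> b is the matrix of the
    linear map k^(dim a) -> k^(dim b), v |-> v *m act f. *)
Record kCmodule (k : fieldType) (C : category) := KCModule {
  mdim : Obj C -> nat;
  act : forall a b, Hom C a b -> 'M[k]_(mdim a, mdim b);
  act_id : forall a, act (idm a) = 1%:M;
  act_comp : forall a b c (f : Hom C a b) (g : Hom C b c),
      act (comp g f) = act f *m act g
}.
Arguments mdim {k C} k0 x : rename.
Arguments act {k C} k0 {a b} f : rename.

Definition rkX (k : fieldType) (C : category) (M N : kCmodule k C)
  (a b : Obj C) (phi : Hom C a b) : int :=
  (\rank (act M phi))%:Z - (\rank (act N phi))%:Z.

(** The condition d^0 X = 0, i.e. an isomorphism of kG_1^C-modules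
    d0^*M (+) d1^*N  ~=  d0^*N (+) d1^*M, written out: for each object [u]
    (u : a -> b non-identity) of G_1^C, an invertible linear map
    P_u : M(b) (+) N(a) -> N(b) (+) M(a), natural with respect to every
    morphism (w o u, v o w) : [u] -> [v] of G_1^C (naturality for identity
    morphisms of G_1^C is automatic). *)
Definition d0_iso (k : fieldType) (C : category) (M N : kCmodule k C) : Prop :=
  exists (P : forall u : Arr C,
          'M[k]_(mdim M (tgt u) + mdim N (src u), mdim N (tgt u) + mdim M (src u)))
         (Q : forall u : Arr C,
          'M[k]_(mdim N (tgt u) + mdim M (src u), mdim M (tgt u) + mdim N (src u))),
    (forall u, ~ is_id u -> P u *m Q u = 1%:M /\ Q u *m P u = 1%:M) /\
    (forall u v, ~ is_id u -> ~ is_id v ->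
      forall w : Hom C (tgt u) (src v),
        block_mx (act M (comp (mor v) w)) 0 0 (act N (comp w (mor u))) *m P v
        = P u *m block_mx (act N (comp (mor v) w)) 0 0 (act M (comp w (mor u)))).

(** Adjacency in G_1^C: there is a morphism [u] -> [v], i.e. some
    w : tgt u -> src v. *)
Definition G1_adj (C : category) (u v : Arr C) : Prop :=
  ~ is_id u /\ ~ is_id v /\ inhabited (Hom C (tgt u) (src v)).

Definition G1_conn (C : category) : relation (Arr C) :=
  clos_refl_sym_trans (Arr C) (@G1_adj C).

Definition line_component (C : category) (L : Arr C -> Prop) : Prop :=
  (exists u, L u) /\
  (forall u, L u -> ~ is_id u) /\
  (forall u v, L u -> ~ is_id v -> (L v <-> G1_conn u v)).

Definition endpoint (C : category) (L : Arr C -> Prop) (x : Obj C) : Prop :=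
  exists u, L u /\ (src u = x \/ tgt u = x).

(* Main.v *)
Require Import Defs.
From Stdlib Require Import Eqdep Relations Classical.
From mathcomp Require Import all_boot all_order all_algebra.
From mathcomp Require Import zify.
Require Import Defs.
Import GRing.Theory Num.Theory.
Local Open Scope ring_scope.
Set Implicit Arguments. Unset Strict Implicit.

Section Aux.
Variables (k : fieldType) (C : category) (M N : kCmodule k C).

Lemma rank_inv m n (P : 'M[k]_(m, n)) (Q : 'M[k]_(n, m)) :
  P *m Q = 1%:M -> \rank P = m.
Proof.
move=> PQ; apply/eqP; rewrite eqn_leq rank_leq_row /=.
by rewrite -{1}(mxrank1 k m) -PQ mxrankM_maxl.
Qed.

Lemma rank_mull m n p (P : 'M[k]_(m, n)) (Q : 'M[k]_(n, m)) (Y : 'M[k]_(n, p)) :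
  Q *m P = 1%:M -> \rank (P *m Y) = \rank Y.
Proof.
move=> QP; apply/eqP; rewrite eqn_leq mxrankM_maxr /=.
by have := mxrankM_maxr Q (P *m Y); rewrite mulmxA QP mul1mx.
Qed.

Lemma lemA (P : forall u : Arr C,
          'M[k]_(mdim M (tgt u) + mdim N (src u), mdim N (tgt u) + mdim M (src u)))
         (Q : forall u : Arr C,
          'M[k]_(mdim N (tgt u) + mdim M (src u), mdim M (tgt u) + mdim N (src u)))
  (hPQ : forall u, ~ is_id u -> P u *m Q u = 1%:M /\ Q u *m P u = 1%:M)
  (u v : Arr C) (hu : ~ is_id u) (hv : ~ is_id v) (w : Hom C (tgt u) (src v))
  (E : block_mx (act M (comp (mor v) w)) 0 0 (act N (comp w (mor u))) *m P v
        = P u *m block_mx (act N (comp (mor v) w)) 0 0 (act M (comp w (mor u)))) :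
  rkX M N (comp (mor v) w) = rkX M N (comp w (mor u)).
Proof.
have := congr1 mxrank E.
have [Pv _] := hPQ v hv; have [_ Qu] := hPQ u hu.
rewrite mxrankMfree; last by rewrite /row_free (rank_inv Pv).
rewrite (rank_mull _ Qu) !rank_diag_block_mx /rkX => h; lia.
Qed.

Lemma lemB (P : forall u : Arr C,
          'M[k]_(mdim M (tgt u) + mdim N (src u), mdim N (tgt u) + mdim M (src u)))
         (Q : forall u : Arr C,
          'M[k]_(mdim N (tgt u) + mdim M (src u), mdim M (tgt u) + mdim N (src u)))
  (hPQ : forall u, ~ is_id u -> P u *m Q u = 1%:M /\ Q u *m P u = 1%:M)
  (u : Arr C) (hu : ~ is_id u) : rkX M N (idm (src u)) = rkX M N (idm (tgt u)).
Proof.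
have [PQ QP] := hPQ u hu.
have h1 := rank_inv PQ; have h2 := rank_inv QP.
have h3 := rank_leq_col (P u); have h4 := rank_leq_col (Q u).
rewrite /rkX !act_id !mxrank1; lia.
Qed.

Lemma id_elim b c (w : Hom C b c) (R : forall b c, Hom C b c -> Prop) :
  is_id (arr w) -> (forall x, R x x (idm x)) -> R b c w.
Proof.
move=> [x H] hR.
have e1 : b = x by exact: (f_equal (@projT1 _ _) H).
subst b.
have H2 := inj_pair2 _ _ _ _ _ H.
have e2 : c = x by exact: (f_equal (@projT1 _ _) H2).
subst c.
have H3 := inj_pair2 _ _ _ _ _ H2.
by rewrite H3.
Qed.

End Aux.

Theorem proposition4p4 (k : fieldType) (C : category)
  (hC : no_id_composites C) (M N : kCmodule k C) (hX : d0_iso M N)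
  (L : Arr C -> Prop) (hL : line_component L) :
  (forall u v : Arr C, L u -> L v -> rkX M N (mor u) = rkX M N (mor v)) /\
  (forall x y : Obj C, endpoint L x -> endpoint L y ->
     rkX M N (idm x) = rkX M N (idm y)).
Proof.
have [P [Q [hPQ hnat]]] := hX.
have hB := lemB hPQ.
have chain : forall a b c (f : Hom C a b) (g : Hom C b c),
    ~ is_id (arr f) -> ~ is_id (arr g) -> rkX M N f = rkX M N g.
  move=> a b c f g hf hg.
  have := lemA hPQ hf hg (hnat (arr f) (arr g) hf hg (idm b)).
  by rewrite /= comp_id_l comp_id_r.
have adj : forall u v, G1_adj u v ->
    rkX M N (mor u) = rkX M N (mor v) /\
    rkX M N (idm (src u)) = rkX M N (idm (src v)).
  move=> [a [b fu]] [c [d fv]] [hu [hv [w]]] /=; change (Hom C b c) in w.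
  have hu' := hB _ hu; have hv' := hB _ hv; rewrite /= in hu' hv' *.
  case: (classic (is_id (arr w))) => hw.
    move: fu hu hu' fv hv hv'.
    apply: (id_elim (R := fun b c w => forall fu : Hom C a b, ~ is_id (arr fu) ->
        rkX M N (idm a) = rkX M N (idm b) -> forall fv : Hom C c d, ~ is_id (arr fv) ->
        rkX M N (idm c) = rkX M N (idm d) ->
        rkX M N fu = rkX M N fv /\ rkX M N (idm a) = rkX M N (idm c)) hw).
    move=> x fu hu hu' fv hv hv'; split; first exact: chain.
    by rewrite hu'.
  have hw' := hB _ hw; rewrite /= in hw'.
  split; first by rewrite (chain _ _ _ _ _ hu hw) (chain _ _ _ _ _ hw hv).
  by rewrite hu' hw'.
have conn : forall u v, G1_conn u v ->
    rkX M N (mor u) = rkX M N (mor v) /\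
    rkX M N (idm (src u)) = rkX M N (idm (src v)).
  move=> u v; elim => {u v}.
  - by move=> u v /adj.
  - by [].
  - by move=> u v _ [-> ->].
  - by move=> u v w _ [-> ->] _ [-> ->].
have [_ [hLn hLc]] := hL.
have LL : forall u v, L u -> L v ->
    rkX M N (mor u) = rkX M N (mor v) /\
    rkX M N (idm (src u)) = rkX M N (idm (src v)).
  move=> u v Lu Lv; apply: conn; exact/(hLc u v Lu (hLn v Lv)).
split; first by move=> u v Lu Lv; case: (LL u v Lu Lv).
have ep : forall x, endpoint L x -> exists u, L u /\ rkX M N (idm x) = rkX M N (idm (src u)).
  move=> x [u [Lu [<-|<-]]]; exists u; split => //.
  by rewrite (hB _ (hLn u Lu)).
move=> x y /ep [u [Lu ->]] /ep [v [Lv ->]].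
by case: (LL u v Lu Lv).
Qed.
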